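(* In the FHMA network described below, if the intensity $\lambda$ satisfies $$\lambda<\frac{\ln\frac{3}{2}-\frac{1}{6}\theta r_0^\alpha WN_0}{c_dr_0^d\theta^\delta C(\delta)\left(2^{-\delta}-2^{\delta-1}3^{-\delta}\right)},$$ then the integer number of sub-bands $N_{\mathrm{opt}}\ge 1$ that minimizes the mean local delay $D(N)$ equals $2$.
   Context: Model: transmitters form a homogeneous Poisson point process $\Phi$ of intensity $\lambda>0$ in $\mathbb{R}^d$; the typical receiver is at the origin and its desired transmitter $x_0\in\Phi$ is at distance $r_0>0$; probabilities are under the Palm distribution at $x_0$. Time is slotted. Path loss $\kappa r^{-\alpha}$ with $\alpha>d$, $\delta=d/\alpha\in(0,1)$. Power fading coefficients are i.i.d. exponential with mean $1$ over transmitters and slots, independent of everything. Unit power, always backlogged transmitters. Bandwidth $W$, noise power spectral density $N_r$, $N_0=N_r/\kappa$, SINR threshold $\theta>0$. $c_d$ is the volume of the unit ball in $\mathbb{R}^d$, $C(\delta)=\Gamma(1+\delta)\Gamma(1-\delta)=\frac{\pi\delta}{\sin(\pi\delta)}$. FHMA with $N$ sub-bands: each transmitter $x$ independently picks a sub-band $\mathcal{S}_k(x)$ uniformly from $\{1,\dots,N\}$ in each slot $k$; $\mathrm{SINR}_k=\frac{h_{k,x_0}r_0^{-\alpha}}{WN_0/N+\sum_{x\in\Phi\setminus\{x_0\}}h_{k,x}|x|^{-\alpha}\mathbf{1}(\mathcal{S}_k(x)=\mathcal{S}_k(x_0))}$; a slot is successful if $\mathrm{SINR}_k>\theta$; the local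 delay is the number of slots until the $N$-th successful slot and $D(N)$ is its mean. (The mean equals $D(N)=N\exp\left(\frac{\lambda c_d r_0^d\theta^{\delta}C(\delta)}{(N-1)^{1-\delta}N^{\delta}}+\frac{\theta r_0^\alpha WN_0}{N}\right)$, with $D(1)=\infty$.) *)

(* Defs.v *)
From Stdlib Require Import Reals Lra.
From Coquelicot Require Import Coquelicot.
Open Scope R_scope.

(* Volume of the unit ball in R^d:  c_0 = 1, c_1 = 2, c_d = (2 pi / d) c_(d-2),
   i.e. c_d = pi^(d/2) / Gamma(d/2 + 1). *)
Fixpoint unit_ball_vol (d : nat) : R :=
  match d with
  | O => 1
  | S O => 2
  | S (S k as d1) => 2 * PI / INR (S d1) * unit_ball_vol k
  end.

(* C(delta) = Gamma(1+delta) Gamma(1-delta) = pi delta / sin(pi delta). *)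
Definition Cdelta (delta : R) : R := PI * delta / sin (PI * delta).

(* Parameters: d dimension, alpha path-loss exponent, lambda intensity,
   r0 link distance, theta SINR threshold, W bandwidth, N0 = N_r / kappa. *)
Definition mean_local_delay (d : nat) (alpha lambda r0 theta W N0 : R)
    (N : nat) : Rbar :=
  let delta := INR d / alpha in
  if (N <=? 1)%nat then p_infty
  else Finite
    (INR N * exp (lambda * unit_ball_vol d * Rpower r0 (INR d)
                    * Rpower theta delta * Cdelta delta
                    / (Rpower (INR N - 1) (1 - delta) * Rpower (INR N) delta)
                  + theta * Rpower r0 alpha * W * N0 / INR N)).

(* Main.v *)
Require Import Defs.
From Stdlib Require Import Reals.
From Coquelicot Require Import Coquelicot.
From Stdlib Require Import Lra Psatz.
Open Scope R_scope.

Lemma alg4 w v : 0<w -> w*v^2 <= 1 -> 1<=v -> v<=4/3 -> w - 1/4 <= 5/3*(w - w*v/2).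
Proof. intros. assert (w*(10*v-8)*v^2 <= (10*v-8)) by nra.
assert (10*v-8 <= 3*v^2) by nra. nra. Qed.
Lemma alg5 w v : 0<w -> w*v^2 <= 1 -> 1<=v -> v<=4/3 -> w - 1/5 <= 2*(w - w*v/2).
Proof. intros. assert (w*(v-1)*v^2 <= (v-1)) by nra.
assert (5*(v-1) <= v^2) by nra. nra. Qed.
Lemma alg6 w v : 0<w -> w*v^2 <= 1 -> 1<=v -> v<=4/3 -> w - 1/6 <= 7/3*(w - w*v/2).
Proof. intros. destruct (Rle_lt_dec (7*v-8) 0). nra.
assert (w*(7*v-8)*v^2 <= (7*v-8)) by nra.
assert (7*v-8 <= v^2) by nra. nra. Qed.

Lemma ln_le' x y : 0 < x -> x <= y -> ln x <= ln y.
Proof. intros H1 H2. destruct H2. left; apply ln_increasing; auto. subst; lra. Qed.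

Lemma ubv_pos d : 0 < unit_ball_vol d /\ 0 < unit_ball_vol (S d).
Proof.
  induction d as [|d [IH1 IH2]]. simpl; lra.
  split; auto. change (unit_ball_vol (S (S d))) with (2 * PI / INR (S (S d)) * unit_ball_vol d).
  apply Rmult_lt_0_compat; auto. apply Rdiv_lt_0_compat. pose proof PI_RGT_0; lra.
  apply lt_0_INR; lia.
Qed.

Lemma exp_mono_le x y : x <= y -> exp x <= exp y.
Proof. intros [H|H]. left; apply exp_increasing; auto. subst; lra. Qed.

Lemma step A T w v y z c L M : 0 <= A -> 0 < c -> z <= y -> w - z <= c*(w - w*v/2) ->
  T*(/2 - z) <= c*(T/6) -> A*(w-w*v/2) + T/6 < L -> c*L <= M -> A*(w-y) + T*(/2-z) < M.
Proof. intros. assert (A*(w-y) <= A*(c*(w - w*v/2))).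
 { apply Rmult_le_compat_l; lra. }
 assert (c * (A*(w-w*v/2) + T/6) < c*L) by (apply Rmult_lt_compat_l; lra). nra. Qed.

Lemma lnpow p q y : 0 < y -> (3/2)^p <= y^q -> INR p * ln(3/2) <= INR q * ln y.
Proof. intros. rewrite <- !ln_pow by lra. apply ln_le'; auto. apply pow_lt; lra. Qed.

Theorem corollary1 (d : nat) (alpha lambda r0 theta W N0 : R) :
  (1 <= d)%nat -> INR d < alpha ->
  0 < lambda -> 0 < r0 -> 0 < theta -> 0 < W -> 0 <= N0 ->
  let delta := INR d / alpha in
  lambda < (ln (3 / 2) - / 6 * theta * Rpower r0 alpha * W * N0)
           / (unit_ball_vol d * Rpower r0 (INR d) * Rpower theta delta * Cdelta delta
              * (Rpower 2 (- delta) - Rpower 2 (delta - 1) * Rpower 3 (- delta))) ->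
  (* N = 2 is the unique minimizer of D over the integers N >= 1 *)
  forall N : nat, (1 <= N)%nat -> N <> 2%nat ->
    Rbar_lt (mean_local_delay d alpha lambda r0 theta W N0 2)
            (mean_local_delay d alpha lambda r0 theta W N0 N).
Proof.
  intros Hd Ha Hl Hr Ht HW HN0 delta Hlam N HN HN2.
  assert (Hd1 : 1 <= INR d) by (apply (le_INR 1); auto).
  assert (Hdel0 : 0 < delta) by (unfold delta; apply Rdiv_lt_0_compat; lra).
  assert (Hdel1 : delta < 1) by (unfold delta; apply Rcomplements.Rlt_div_l; lra).
  set (Kc := unit_ball_vol d * Rpower r0 (INR d) * Rpower theta delta * Cdelta delta).
  assert (HK : 0 < Kc).
  { assert (HC : 0 < Cdelta delta).
    { unfold Cdelta. pose proof PI_RGT_0. apply Rdiv_lt_0_compat. nra.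
      apply sin_gt_0; nra. }
    pose proof (proj1 (ubv_pos d)). pose proof (exp_pos (INR d * ln r0)).
    pose proof (exp_pos (delta * ln theta)). unfold Kc, Rpower.
    apply Rmult_lt_0_compat; [|auto]. apply Rmult_lt_0_compat; [|auto].
    apply Rmult_lt_0_compat; auto. }
  set (T := theta * Rpower r0 alpha * W * N0).
  assert (HT : 0 <= T).
  { unfold T. pose proof (exp_pos (alpha * ln r0)). unfold Rpower.
    apply Rmult_le_pos; [|lra]. apply Rmult_le_pos; [|lra]. nra. }
  set (a := Rpower 2 delta). set (b := Rpower 3 delta).
  assert (Ha0 : 0 < a) by apply exp_pos. assert (Hb0 : 0 < b) by apply exp_pos.
  assert (ln2 : 0 < ln 2) by (rewrite <- ln_1; apply ln_increasing; lra).
  assert (l34 : ln 3 < ln 4) by (apply ln_increasing; lra).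
  assert (l89 : ln 8 < ln 9) by (apply ln_increasing; lra).
  assert (e4 : ln 4 = 2 * ln 2) by (replace 4 with (2^2) by lra; rewrite ln_pow; simpl; lra).
  assert (e8 : ln 8 = 3 * ln 2) by (replace 8 with (2^3) by lra; rewrite ln_pow; simpl; lra).
  assert (e9 : ln 9 = 2 * ln 3) by (replace 9 with (3^2) by lra; rewrite ln_pow; simpl; lra).
  assert (Ea2 : a^2 = exp (2 * (delta * ln 2))).
  { unfold a, Rpower. simpl. rewrite Rmult_1_r, <- exp_plus. f_equal; ring. }
  assert (Ea3 : a^3 = exp (3 * (delta * ln 2))).
  { unfold a, Rpower. simpl. rewrite Rmult_1_r, <- !exp_plus. f_equal; ring. }
  assert (Eb2 : b^2 = exp (2 * (delta * ln 3))).
  { unfold b, Rpower. simpl. rewrite Rmult_1_r, <- exp_plus. f_equal; ring. }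
  assert (R1 : a^3 <= b^2).
  { rewrite Ea3, Eb2. apply exp_mono_le. nra. }
  assert (R2 : b <= a^2).
  { rewrite Ea2. unfold b, Rpower. apply exp_mono_le. nra. }
  assert (R3 : a^2 <= 4/3 * b).
  { rewrite Ea2. unfold b, Rpower.
    assert (E43 : 4/3 = exp (ln 4 - ln 3)).
    { unfold Rminus. rewrite exp_plus, exp_Ropp, !exp_ln; lra. }
    rewrite E43, <- exp_plus. apply exp_mono_le. nra. }
  set (w := / a). set (v := a^2 / b).
  assert (Hw : 0 < w) by (apply Rinv_0_lt_compat; auto).
  assert (Hv1 : 1 <= v) by (unfold v; apply Rcomplements.Rle_div_r; lra).
  assert (Hv2 : v <= 4/3) by (unfold v; apply Rcomplements.Rle_div_l; lra).
  assert (Hwv : w * v^2 <= 1).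
  { unfold w, v. replace (/ a * (a ^ 2 / b) ^ 2) with (a^3 / b^2) by (field; split; [nra|lra]).
    apply Rcomplements.Rle_div_l; nra. }
  assert (Pm2 : Rpower 2 (- delta) = w) by (apply Rpower_Ropp).
  assert (Pm3 : Rpower 3 (- delta) = / b) by (apply Rpower_Ropp).
  assert (P2d : Rpower 2 (delta - 1) = a * / 2).
  { replace (delta - 1) with (delta + - (1)) by ring. rewrite Rpower_plus, Rpower_Ropp, Rpower_1; [reflexivity|lra]. }
  assert (Ef3 : a * / 2 * / b = w * v / 2) by (unfold w, v; field; lra).
  rewrite Pm2, Pm3, P2d, Ef3 in Hlam. fold Kc in Hlam.
  replace (/ 6 * theta * Rpower r0 alpha * W * N0) with (T / 6) in Hlam by (unfold T; field).
  assert (Hpos : 0 < Kc * (w - w * v / 2)).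
  { apply Rmult_lt_0_compat; auto. nra. }
  assert (HX : lambda * Kc * (w - w * v / 2) + T / 6 < ln (3/2)).
  { assert (lambda * (Kc * (w - w * v / 2)) < ln (3/2) - T/6).
    { replace (ln (3/2) - T/6) with ((ln (3/2) - T/6) / (Kc * (w - w * v / 2)) * (Kc * (w - w * v / 2))) by (field; split; [nra|lra]).
      apply Rmult_lt_compat_r; auto. }
    lra. }
  unfold mean_local_delay. cbv zeta. fold delta.
  destruct N as [|[|n]]; [lia| simpl; exact I |].
  change ((2 <=? 1)%nat) with false. change ((S (S n) <=? 1)%nat) with false. cbv iota.
  cbn [Rbar_lt].
  set (x := INR (S (S n))).
  assert (I2 : INR 2 = 2) by (simpl; lra). rewrite I2.
  replace (2 - 1) with 1 by lra.
  assert (R1d : Rpower 1 (1 - delta) = 1) by (unfold Rpower; rewrite ln_1, Rmult_0_r; apply exp_0).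
  rewrite R1d. fold a.
  replace (lambda * unit_ball_vol d * Rpower r0 (INR d) * Rpower theta delta * Cdelta delta)
    with (lambda * Kc) by (unfold Kc; ring).
  fold T.
  set (P := Rpower (x - 1) (1 - delta) * Rpower x delta).
  assert (Hx : 3 <= x).
  { unfold x. destruct n as [|n]; [lia|]. rewrite !S_INR. pose proof (pos_INR n). lra. }
  assert (HP : 0 < P) by (unfold P; apply Rmult_lt_0_compat; apply exp_pos).
  assert (ln32 : ln (3/2) = ln 3 - ln 2) by (rewrite ln_div; lra).
  assert (Key : lambda * Kc * (w - / P) + T * (/2 - /x) < ln x - ln 2).
  { destruct n as [|[|n]]; [lia| |].
    -
      assert (x3 : x = 3) by (unfold x; simpl; lra).
      assert (EP : / P = w * v / 2).
      { unfold P. rewrite x3. replace (3 - 1) with 2 by lra.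
        replace (1 - delta) with (1 + - delta) by ring. rewrite Rpower_plus, Rpower_Ropp, Rpower_1 by lra.
        fold a b. unfold w, v. field. lra. }
      rewrite EP, x3. replace (/2 - /3) with (/6) by field. rewrite <- ln32. lra.
    - assert (HPx : P <= x).
      { unfold P. rewrite <- (Rpower_1 x) at 3 by lra. replace 1 with ((1 - delta) + delta) at 3 by ring.
        rewrite Rpower_plus. apply Rmult_le_compat_r. left; apply exp_pos.
        apply Rle_Rpower_l; lra. }
      assert (Hyz : / x <= / P) by (apply Rinv_le_contravar; lra).
      assert (HA : 0 <= lambda * Kc) by nra.
      assert (lnx2 : ln x - ln 2 = ln (x / 2)) by (rewrite ln_div; lra).
      rewrite lnx2.
      destruct n as [|[|[|n]]].
      + assert (x4 : x = 4) by (unfold x; simpl; lra). rewrite x4 in *.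
        apply (step _ _ _ v _ _ (5/3) (ln (3/2))); try lra.
        * replace (/4) with (1/4) by field. apply alg4; lra.
        * pose proof (lnpow 5 3 2 ltac:(lra) ltac:(simpl; lra)). replace (4/2) with 2 by field.
          simpl INR in H. lra.
      + assert (x5 : x = 5) by (unfold x; simpl; lra). rewrite x5 in *.
        apply (step _ _ _ v _ _ 2 (ln (3/2))); try lra.
        * replace (/5) with (1/5) by field. apply alg5; lra.
        * pose proof (lnpow 2 1 (5/2) ltac:(lra) ltac:(simpl; lra)).
          simpl INR in H. lra.
      + assert (x6 : x = 6) by (unfold x; simpl; lra). rewrite x6 in *.
        apply (step _ _ _ v _ _ (7/3) (ln (3/2))); try lra.
        * replace (/6) with (1/6) by field. apply alg6; lra.
        * pose proof (lnpow 7 3 (6/2) ltac:(lra) ltac:(simpl; lra)).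
          simpl INR in H. lra.
      + assert (x7 : 7 <= x).
        { unfold x. rewrite !S_INR. pose proof (pos_INR n). lra. }
        apply (step _ _ _ v _ _ 3 (ln (3/2))); try lra.
        * assert (0 < / x) by (apply Rinv_0_lt_compat; lra). nra.
        * assert (0 < / x) by (apply Rinv_0_lt_compat; lra). nra.
        * pose proof (lnpow 3 1 (x/2) ltac:(lra) ltac:(simpl; lra)).
          simpl INR in H. lra. }
  assert (E2 : 2 * exp (lambda * Kc / (1 * a) + T / 2) = exp (ln 2 + (lambda * Kc * w + T / 2))).
  { rewrite (exp_plus (ln 2)), exp_ln by lra. unfold w. f_equal. f_equal. field. lra. }
  assert (EN : x * exp (lambda * Kc / P + T / x) = exp (ln x + (lambda * Kc * / P + T * / x))).
  { rewrite (exp_plus (ln x)), exp_ln by lra. reflexivity. }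
  rewrite E2, EN. apply exp_increasing. lra.
Qed.
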